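(* Let $I_{H,\Delta,d}$ be a reducible hidden variable ideal, i.e. $\Delta$ is reducible with components $\Delta_1,\Delta_2$ and separator $S$, and $H\cap S=\emptyset$. Let $H_l=H\cap|\Delta_l|$ and let $d^l$ be the restriction of $d$ to $|\Delta_l|$. In each of the rings $\mathbb{K}[q]$, $\mathbb{K}[q]_1$, $\mathbb{K}[q]_2$ grade the variables by $\deg q_{\mathbf{i}}=e_{\mathbf{i}_S}\in\mathbb{Z}^{D_S}$, and let $\mathcal{A}=\{e_\sigma:\sigma\in D_S\}$. Then $\mathcal{A}$ is linearly independent and $$I_{H,\Delta,d}=I_{H_1,\Delta_1,d^1}\times_{\mathcal{A}}I_{H_2,\Delta_2,d^2},$$ where the toric fiber product variable corresponding to $q_{\mathbf{i}}$ is the product of the variables of $\mathbb{K}[q]_1$ and $\mathbb{K}[q]_2$ obtained by restricting $\mathbf{i}$ to $|\Delta_1|$ and $|\Delta_2|$.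
   Context: $\mathbb{K}$ is a field. $\Delta$ is a simplicial complex on $[n]$ with $|\Delta|:=\bigcup_{F\in\Delta}F=[n]$, $d=(d_1,\dots,d_n)$ with $d_i\ge2$; $D_F=\prod_{k\in F}[d_k]$ and $\mathbf{i}_F$ denotes restriction of an index vector to $F$. $\mathbb{K}[p]=\mathbb{K}[p_{\mathbf{i}}:\mathbf{i}\in D_{[n]}]$, $\mathbb{K}[a]=\mathbb{K}[a^F_{\mathbf{j}_F}:F\in\mathrm{facet}(\Delta),\mathbf{j}_F\in D_F]$, $\phi_{\Delta,d}:p_{\mathbf{i}}\mapsto\prod_{F\in\mathrm{facet}(\Delta)}a^F_{\mathbf{i}_F}$. $H\subseteq[n]$ is the set of hidden nodes, $O=[n]\setminus H$. $\mathbb{K}[q]=\mathbb{K}[q_{\mathbf{i}}]$ with $\mathbf{i}$ having entries $\mathbf{i}_O\in D_O$ and $i_l=\bullet$ for $l\in H$. $\psi_H:\mathbb{K}[q]\to\mathbb{K}[p]$, $q_{\mathbf{i}}\mapsto\sum_{\mathbf{j}_H\in D_H}p_{\mathbf{i}_O\mathbf{j}_H}$, where $p_{\mathbf{i}_O\mathbf{j}_H}$ is the variable with index $\mathbf{i}_O$ on $O$ and $\mathbf{j}_H$ on $H$. The hidden variable ideal is $I_{H,\Delta,d}=\ker(\phi_{\Delta,d}\circ\psi_H)$. $\Delta$ is reducible if there are subcomplexes $\Delta_1,\Delta_2$ with $\Delta_1\cup\Delta_2=\Delta$ and $\Delta_1\cap\Delta_2=2^S$ for some $S\subseteq[n]$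 (the separator); $I_{H,\Delta,d}$ is called reducible if moreover $H\cap S=\emptyset$. $\mathbb{K}[q]_l$ and $I_{H_l,\Delta_l,d^l}$ are defined in the same way for $\Delta_l$ on the vertex set $|\Delta_l|$ with hidden set $H_l$. $e_\sigma$ is the standard unit vector of $\mathbb{Z}^{D_S}$ at $\sigma$. Toric fiber product: for polynomial rings $\mathbb{K}[x^i_j]$, $\mathbb{K}[y^i_k]$ graded by $\deg x^i_j=\deg y^i_k=\mathbf{a}^i$ and homogeneous ideals $I,J$, $I\times_{\mathcal{A}}J$ is the kernel of $\mathbb{K}[z^i_{jk}]\to\mathbb{K}[x]/I\otimes_{\mathbb{K}}\mathbb{K}[y]/J$, $z^i_{jk}\mapsto x^i_j\otimes y^i_k$. *)

(* Defs.v *)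
From HB Require Import structures.
From mathcomp Require Import all_boot all_order all_algebra.
From mathcomp Require Import mpoly.
Set Implicit Arguments. Unset Strict Implicit. Unset Printing Implicit Defensive.
Import GRing.Theory.
Local Open Scope ring_scope.

Definition polyT (K : fieldType) (T : finType) := {mpoly K[#|T|]}.

Definition var (K : fieldType) (T : finType) (t : T) : polyT K T :=
  'X_(enum_rank t).

Definition subst (K : fieldType) (T U : finType) (h : T -> polyT K U)
  (p : polyT K T) : polyT K U :=
  mmap (@mpolyC _ K) (fun i => h (enum_val i)) p.

Definition ideal_gen (K : fieldType) (T : finType) (P : polyT K T -> Prop)
  (f : polyT K T) : Prop :=
  exists (m : nat) (g c : 'I_m -> polyT K T),
    (forall k, P (g k)) /\ f = \sum_(k < m) c k * g k.

Definition simplicial_complex (n : nat) (D : {set {set 'I_n}}) : Prop :=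
  forall F G : {set 'I_n}, F \in D -> G \subset F -> G \in D.

Definition facets (n : nat) (D : {set {set 'I_n}}) : {set {set 'I_n}} :=
  [set F in D | [forall G in D, (F \subset G) ==> (G == F)]].

Definition supp (n : nat) (D : {set {set 'I_n}}) : {set 'I_n} :=
  \bigcup_(F in D) F.

(* An index vector i in D_F = prod_{k in F} [d_k] is encoded (0-based) as a
   function 'I_n -> 'I_N with i k < d k for k in F and i k = 0 outside F,
   where N bounds all the d k. *)
Definition bnd (n : nat) (d : 'I_n -> nat) : nat := (\max_(k < n) d k).+1.

Definition vec (n : nat) (d : 'I_n -> nat) := {ffun 'I_n -> 'I_(bnd d)}.

Definition validb (n : nat) (d : 'I_n -> nat) (F : {set 'I_n}) (x : vec d) : bool :=
  [forall k, if k \in F then (x k < d k)%N else x k == ord0].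

Definition DF (n : nat) (d : 'I_n -> nat) (F : {set 'I_n}) :=
  {x : vec d | validb F x}.

Definition restr (n : nat) (d : 'I_n -> nat) (F : {set 'I_n}) (x : vec d) : vec d :=
  [ffun k => if k \in F then x k else ord0].

(* index type of the parameters a^F_j, F a facet, j in D_F *)
Definition Aidx (n : nat) (d : 'I_n -> nat) (D : {set {set 'I_n}}) :=
  {p : {set 'I_n} * vec d | (p.1 \in facets D) && validb p.1 p.2}.

Section Hidden.
Variables (K : fieldType) (n : nat) (d : 'I_n -> nat) (D : {set {set 'I_n}})
  (H : {set 'I_n}).

Definition obs : {set 'I_n} := supp D :\: H.

(* a^F_{x_F}  (the insub always succeeds for x in D_{|Delta|}) *)
Definition avar (F : {set 'I_n}) (x : vec d) : polyT K (Aidx d D) :=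
  match insub (F, restr F x) with
  | Some t => var K t
  | None => 0
  end.

Definition phi_hid : polyT K (DF d (supp D)) -> polyT K (Aidx d D) :=
  subst (fun i : DF d (supp D) => \prod_(F in facets D) avar F (val i)).

Definition psi_hid : polyT K (DF d obs) -> polyT K (DF d (supp D)) :=
  subst (fun i : DF d obs =>
    \sum_(y : DF d (supp D) | restr obs (val y) == val i) var K y).

Definition hidden_ideal (f : polyT K (DF d obs)) : Prop :=
  phi_hid (psi_hid f) = 0.

End Hidden.

Section TFP.
Variables (K : fieldType) (X Y : finType) (A : eqType)
  (degX : X -> A) (degY : Y -> A).

Definition Zidx := {p : X * Y | degX p.1 == degY p.2}.

Definition inl_poly : polyT K X -> polyT K (X + Y)%type :=
  subst (fun j : X => var K (inl j : (X + Y)%type)).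
Definition inr_poly : polyT K Y -> polyT K (X + Y)%type :=
  subst (fun k : Y => var K (inr k : (X + Y)%type)).

(* K[x]/I (x)_K K[y]/J is realised as K[x,y]/(I K[x,y] + J K[x,y]) *)
Definition tfp (I : polyT K X -> Prop) (J : polyT K Y -> Prop)
  (f : polyT K Zidx) : Prop :=
  ideal_gen (fun g => (exists h, I h /\ g = inl_poly h) \/
                      (exists h, J h /\ g = inr_poly h))
    (subst (fun z : Zidx => var K (inl (val z).1 : (X + Y)%type) *
                            var K (inr (val z).2 : (X + Y)%type)) f).

End TFP.

Definition unitv (n : nat) (d : 'I_n -> nat) (S : {set 'I_n}) (s : DF d S)
  : {ffun DF d S -> int} := [ffun t => ((t == s) : nat)%:Z].

Definition qdeg (n : nat) (d : 'I_n -> nat) (S O : {set 'I_n}) (i : DF d O)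
  : {ffun DF d S -> int} := [ffun t => ((val t == restr S (val i)) : nat)%:Z].

(* Main.v *)
Require Import Defs.
From HB Require Import structures.
From mathcomp Require Import all_boot all_order all_algebra.
From mathcomp Require Import mpoly ring.
From Stdlib Require Import Classical.
Set Implicit Arguments. Unset Strict Implicit. Unset Printing Implicit Defensive.
Import GRing.Theory.
Local Open Scope ring_scope.

Section Gen.
Variable K : fieldType.

Definition rm (R : ringType) (T : finType) (g : polyT K T -> R) :=
  [/\ forall p q, g (p + q) = g p + g q, forall p q, g (p * q) = g p * g q & g 1 = 1].

Lemma rm_subst (T U : finType) (h : T -> polyT K U) : rm (subst h).
Proof. rewrite /subst; split; [exact: rmorphD | exact: rmorphM | exact: rmorph1]. Qed.

Lemma rm_comp (R1 : ringType) (T U : finType) (g : polyT K U -> R1) (h : T -> polyT K U) :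
  rm g -> rm (g \o subst h).
Proof.
case=> gD gM g1; case: (rm_subst h) => hD hM h1.
by split=> [p q|p q|] /=; rewrite ?hD ?hM ?h1.
Qed.

Lemma rm0 (R : ringType) (T : finType) (g : polyT K T -> R) : rm g -> g 0 = 0.
Proof. by case=> gD _ _; apply/(@addrI _ (g 0)); rewrite -gD !addr0. Qed.

Lemma rmX (R : ringType) (T : finType) (g : polyT K T -> R) p k : rm g -> g (p ^+ k) = g p ^+ k.
Proof. case=> _ gM g1; elim: k => [|k IH]; by rewrite ?expr0 ?g1 // !exprS gM IH. Qed.

Lemma rm_sum (R : ringType) (T : finType) (g : polyT K T -> R) (I : Type) (r : seq I) (P : pred I) F :
  rm g -> g (\sum_(i <- r | P i) F i) = \sum_(i <- r | P i) g (F i).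
Proof. move=> hg; case: (hg) => gD _ _; exact: (big_morph g gD (rm0 hg)). Qed.

Lemma rm_prod (R : ringType) (T : finType) (g : polyT K T -> R) (I : Type) (r : seq I) (P : pred I) F :
  rm g -> g (\prod_(i <- r | P i) F i) = \prod_(i <- r | P i) g (F i).
Proof. case=> _ gM g1; exact: (big_morph g gM g1). Qed.

Lemma morph_ext (R : ringType) (T : finType) (g1 g2 : polyT K T -> R) :
  rm g1 -> rm g2 -> (forall c, g1 c%:MP = g2 c%:MP) ->
  (forall t, g1 (var K t) = g2 (var K t)) -> forall p, g1 p = g2 p.
Proof.
move=> h1 h2 hC hV.
have hX (g : polyT K T -> R) m : rm g ->
    g 'X_[m] = \prod_(i < #|T|) g (var K (enum_val i)) ^+ m i.
  move=> hg; rewrite mpolyXE_id (rm_prod _ _ _ hg); apply: eq_bigr => i _.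
  by rewrite (rmX _ _ hg) /var enum_valK.
elim/mpolyind => [|c m p _ _ IH]; first by rewrite (rm0 h1) (rm0 h2).
case: (h1) => D1 M1 _; case: (h2) => D2 M2 _.
rewrite D1 D2 IH -mul_mpolyC M1 M2 hC (hX _ _ h1) (hX _ _ h2).
by congr (_ * _ + _); apply: eq_bigr => i _; rewrite hV.
Qed.

Lemma substX (T U : finType) (h : T -> polyT K U) t : subst h (var K t) = h t.
Proof. by rewrite /subst /var mmapX mmap1U enum_rankK. Qed.

Lemma substC (T U : finType) (h : T -> polyT K U) c : subst h c%:MP = c%:MP.
Proof. by rewrite /subst mmapC. Qed.

Lemma subst_morph (T U : finType) (g : polyT K T -> polyT K U) :
  rm g -> (forall c, g c%:MP = c%:MP) -> forall p, g p = subst (fun t => g (var K t)) p.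
Proof.
move=> hg hc; apply: morph_ext => //; first exact: rm_subst.
  by move=> c; rewrite substC hc.
by move=> t; rewrite substX.
Qed.

Lemma subst_comp (T U V : finType) (h : T -> polyT K U) (g : U -> polyT K V) p :
  subst g (subst h p) = subst (fun t => subst g (h t)) p.
Proof.
have := @subst_morph T V (subst g \o subst h) (rm_comp h (rm_subst g)) _ p.
rewrite /= => ->; last by move=> c; rewrite !substC.
by apply: morph_ext; [exact: rm_subst|exact: rm_subst|move=> c; rewrite !substC|move=> t; rewrite !substX].
Qed.

End Gen.

Lemma subst_eq (K : fieldType) (T U : finType) (f g : T -> polyT K U) p :
  f =1 g -> subst f p = subst g p.
Proof.
move=> fg; apply: morph_ext; try exact: rm_subst.
  by move=> c; rewrite !substC.
by move=> t; rewrite !substX.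
Qed.

Lemma mmapXi (n : nat) (R S : comRingType) (f : {rmorphism R -> S}) (h : 'I_n -> S) i :
  mmap f h 'X_i = h i.
Proof. by rewrite mmapX mmap1U. Qed.

Section Tensor.
Variables (K : fieldType) (X Y : finType).
Local Notation IX := (@inl_poly K X Y).
Local Notation IY := (@inr_poly K X Y).

Definition decomp (g : polyT K (X + Y)%type) :=
  exists s : seq (polyT K X * polyT K Y), g = \sum_(p <- s) IX p.1 * IY p.2.

Lemma decompD g h : decomp g -> decomp h -> decomp (g + h).
Proof. by move=> [s ->] [t ->]; exists (s ++ t); rewrite big_cat. Qed.

Lemma decompM g h : decomp g -> decomp h -> decomp (g * h).
Proof.
move=> [s ->] [t ->].
exists (map (fun pq : (polyT K X * polyT K Y) * (polyT K X * polyT K Y) => (pq.1.1 * pq.2.1, pq.1.2 * pq.2.2)) [seq (p, q) | p <- s, q <- t]).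
rewrite big_map big_allpairs mulr_suml; apply: eq_bigr => p _; rewrite mulr_sumr.
apply: eq_bigr => q _ /=; case: (rm_subst (fun j : X => var K (inl j : (X + Y)%type))) => _ M1 _.
case: (rm_subst (fun j : Y => var K (inr j : (X + Y)%type))) => _ M2 _.
by rewrite /inl_poly /inr_poly M1 M2 mulrACA.
Qed.

Lemma decompC c : decomp c%:MP.
Proof.
exists [:: (c%:MP, 1)]; rewrite big_seq1 /= /inl_poly /inr_poly substC.
by case: (rm_subst (fun j : Y => var K (inr j : (X + Y)%type))) => _ _ ->; rewrite mulr1.
Qed.

Lemma decompV t : decomp (var K t).
Proof.
case: t => [j|k].
  exists [:: (var K j, 1)]; rewrite big_seq1 /= /inl_poly /inr_poly substX.
  by case: (rm_subst (fun j : Y => var K (inr j : (X + Y)%type))) => _ _ ->; rewrite mulr1.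
exists [:: (1, var K k)]; rewrite big_seq1 /= /inl_poly /inr_poly substX.
by case: (rm_subst (fun j : X => var K (inl j : (X + Y)%type))) => _ _ ->; rewrite mul1r.
Qed.

Lemma decomp_all g : decomp g.
Proof.
elim/mpolyind: g => [|c m p _ _ IH]; first by exists [::]; rewrite big_nil.
apply: decompD => //; rewrite -mul_mpolyC; apply: decompM; first exact: decompC.
rewrite mpolyXE_id; elim/big_rec: _ => [|i x _ Hx]; first exact: (decompC 1).
apply: decompM => //; elim: (m i) => [|k IHk]; first by rewrite expr0; exact: (decompC 1).
by rewrite exprS; apply: decompM => //; have := decompV (enum_val i); rewrite /var enum_valK.
Qed.

End Tensor.

Section Tensor2.
Variables (K : fieldType) (U V : finType).
Local Notation E1 := (@inl_poly K U V).
Local Notation E2 := (@inr_poly K U V).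

Definition sig (p : polyT K (U + V)%type) : {mpoly (polyT K V)[#|U|]} :=
  mmap ((@mpolyC #|U| (polyT K V)) \o (@mpolyC #|V| K))
    (fun i => match enum_val i with inl u => 'X_(enum_rank u) | inr v => (var K v)%:MP end) p.

Lemma rm_sig : rm sig.
Proof. rewrite /sig; split; [exact: rmorphD | exact: rmorphM | exact: rmorph1]. Qed.

Lemma sigE1 u : sig (E1 u) = map_mpoly (@mpolyC #|V| K) u.
Proof.
have := @morph_ext K _ U (sig \o E1) (map_mpoly (@mpolyC #|V| K)) (rm_comp _ rm_sig) _ _ _ u.
apply => //.
- by split; [exact: rmorphD | exact: rmorphM | exact: rmorph1].
- by move=> c; rewrite /= /inl_poly substC /sig mmapC map_mpolyC.
- move=> t; rewrite /= /inl_poly substX /sig /var mmapXi enum_rankK.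
  by rewrite map_mpolyX.
Qed.

Lemma sigE2 v : sig (E2 v) = v%:MP.
Proof.
have := @morph_ext K _ V (sig \o E2) (@mpolyC #|U| (polyT K V)) (rm_comp _ rm_sig) _ _ _ v.
apply => //.
- by split; [exact: rmorphD | exact: rmorphM | exact: rmorph1].
- by move=> c; rewrite /= /inr_poly substC /sig mmapC.
- by move=> t; rewrite /= /inr_poly substX /sig /var mmapXi enum_rankK.
Qed.

Lemma sep_coef (m : nat) (u : 'I_m -> polyT K U) (v : 'I_m -> polyT K V) :
  \sum_k E1 (u k) * E2 (v k) = 0 -> forall mm, \sum_k ((u k)@_mm)%:MP * v k = 0.
Proof.
move=> H0 mm; transitivity ((sig (\sum_k E1 (u k) * E2 (v k)))@_mm); last first.
  by rewrite H0 (rm0 rm_sig) mcoeff0.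
rewrite (rm_sum _ _ _ rm_sig) raddf_sum /=; apply: eq_bigr => k _.
case: rm_sig => _ sM _; rewrite sM sigE1 sigE2 [map_mpoly _ _ * _]mulrC mcoeffCM mcoeff_map_mpoly.
by rewrite mulrC.
Qed.

End Tensor2.

Section Ideal.
Variables (K : fieldType) (T : finType) (P : polyT K T -> Prop).

Lemma ideal_seq (s : seq (polyT K T * polyT K T)) :
  (forall p, p \in s -> P p.2) -> ideal_gen P (\sum_(p <- s) p.1 * p.2).
Proof.
move=> H; exists (size s), (fun k => (nth (0,0) s k).2), (fun k => (nth (0,0) s k).1).
split; first by move=> k; apply: H; apply: mem_nth.
by rewrite (big_nth (0,0)) big_mkord.
Qed.

Lemma ideal_toseq f : ideal_gen P f ->
  exists s : seq (polyT K T * polyT K T), (forall p, p \in s -> P p.2) /\ f = \sum_(p <- s) p.1 * p.2.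
Proof.
move=> [m [g [c [Hg ->]]]]; exists [seq (c k, g k) | k <- index_enum 'I_m]; split.
  by move=> p /mapP [k _ ->]; apply: Hg.
by rewrite big_map.
Qed.

Lemma idealD f g : ideal_gen P f -> ideal_gen P g -> ideal_gen P (f + g).
Proof.
move=> /ideal_toseq [s [Hs ->]] /ideal_toseq [t [Ht ->]].
rewrite -big_cat; apply: ideal_seq => p; rewrite mem_cat => /orP [] ?; by [apply: Hs|apply: Ht].
Qed.

Lemma ideal1 c g : P g -> ideal_gen P (c * g).
Proof.
move=> Hg; have := @ideal_seq [:: (c, g)]; rewrite big_seq1; apply.
by move=> p; rewrite mem_seq1 => /eqP ->.
Qed.

End Ideal.

Section TensorMain.
Variables (K : fieldType) (X Y U V : finType) (psi1 : X -> polyT K U) (psi2 : Y -> polyT K V).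
Local Notation IX := (@inl_poly K X Y).
Local Notation IY := (@inr_poly K X Y).
Local Notation E1 := (@inl_poly K U V).
Local Notation E2 := (@inr_poly K U V).

Definition Psi := subst (fun z : (X + Y)%type =>
  match z with inl j => E1 (psi1 j) | inr k => E2 (psi2 k) end).

Definition Pgen (g : polyT K (X + Y)%type) :=
  (exists h, subst psi1 h = 0 /\ g = IX h) \/ (exists h, subst psi2 h = 0 /\ g = IY h).

Lemma Psi_IX a : Psi (IX a) = E1 (subst psi1 a).
Proof.
rewrite /Psi /inl_poly !subst_comp; apply: subst_eq => t; by rewrite substX.
Qed.

Lemma Psi_IY b : Psi (IY b) = E2 (subst psi2 b).
Proof.
rewrite /Psi /inr_poly !subst_comp; apply: subst_eq => t; by rewrite substX.
Qed.


Lemma substCM (T W : finType) (h : T -> polyT K W) c p :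
  subst h (c%:MP * p) = c%:MP * subst h p.
Proof. by case: (rm_subst h) => _ M _; rewrite M substC. Qed.

Lemma substB (T W : finType) (h : T -> polyT K W) p q :
  subst h (p - q) = subst h p - subst h q.
Proof. by rewrite /subst raddfB. Qed.

Lemma tensor_main N : forall m (a : 'I_m -> polyT K X) (b : 'I_m -> polyT K Y),
  (#|[pred k | b k != 0%R]| < N)%N ->
  Psi (\sum_k IX (a k) * IY (b k)) = 0 -> ideal_gen Pgen (\sum_k IX (a k) * IY (b k)).
Proof.
elim: N => [//|N IH] m a b hc H0.
have rmP := rm_subst (fun z : (X + Y)%type =>
  match z with inl j => E1 (psi1 j) | inr k => E2 (psi2 k) end).
have H1 : \sum_k E1 (subst psi1 (a k)) * E2 (subst psi2 (b k)) = 0.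
  rewrite -[RHS]H0 /Psi (rm_sum _ _ _ rmP); apply: eq_bigr => k _.
  by case: rmP => _ M _; rewrite /Psi M -/Psi Psi_IX Psi_IY.
case: (classic (forall lam : 'I_m -> K, \sum_k (lam k)%:MP * subst psi2 (b k) = 0 ->
                  forall k, b k != 0 -> lam k = 0)) => [Hind|Hdep].
  have Ha : forall k, b k != 0 -> subst psi1 (a k) = 0.
    move=> k bk; apply/mpolyP => mm; rewrite mcoeff0.
    exact: (Hind (fun k => (subst psi1 (a k))@_mm) (sep_coef H1 mm)).
  rewrite (_ : \sum_k IX (a k) * IY (b k) = \sum_(p <- [seq (IY (b k), IX (if b k == 0 then 0 else a k)) | k <- index_enum 'I_m]) p.1 * p.2).
    apply: ideal_seq => p /mapP [k _ ->] /=.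
    left; exists (if b k == 0 then 0 else a k); split => //.
  by case: eqP => [_|/eqP bk]; [exact: (rm0 (rm_subst _))|exact: Ha].
  rewrite big_map; apply: eq_bigr => k _ /=; case: eqP => [->|/eqP bk].
    by rewrite /inr_poly (rm0 (rm_subst _)) !mulr0 mul0r.
  by rewrite mulrC.
move: Hdep => /not_all_ex_not [lam] H2; have [Hrel H3] := imply_to_and _ _ H2; have [j H4] := not_all_ex_not _ _ H3; have [bj lj] := imply_to_and _ _ H4.
have lj0 : lam j != 0 by apply/eqP.
pose b' := \sum_k (lam k)%:MP * b k.
pose a' := fun k => a k - (lam k / lam j)%:MP * a j.
pose b'' := fun k => if k == j then 0 else b k.
have IYb' : IY b' = \sum_k (lam k)%:MP * IY (b k).
  by rewrite /b' /inr_poly (rm_sum _ _ _ (rm_subst _)); apply: eq_bigr => k _; rewrite substCM.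
have Heq : \sum_k IX (a k) * IY (b k) =
    IX ((lam j)^-1%:MP * a j) * IY b' + \sum_k IX (a' k) * IY (b'' k).
  rewrite IYb' mulr_sumr -big_split /=; apply: eq_bigr => k _.
  rewrite /a' /b''; case: eqP => [->|/eqP kj].
    rewrite /inr_poly (rm0 (rm_subst _)) mulr0 addr0 -/(IY (b j)) /inl_poly substCM.
    by rewrite mulrACA -mpolyCM mulVf // mul1r.
  rewrite /inl_poly !substB !substCM mpolyCM; ring.
have rmPsi : rm Psi := rm_subst _.
have HT : Psi (IX ((lam j)^-1%:MP * a j) * IY b') = 0.
  case: rmPsi => _ M _; rewrite M Psi_IY /b' (rm_sum _ _ _ (rm_subst _)).
  rewrite (eq_bigr (fun k => (lam k)%:MP * subst psi2 (b k))); last by move=> k _; rewrite substCM.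
  by rewrite Hrel /inr_poly (rm0 (rm_subst _)) mulr0.
rewrite Heq; apply: idealD.
  apply: ideal1; right; exists b'; split => //.
  rewrite /b' (rm_sum _ _ _ (rm_subst _)) -[RHS]Hrel; apply: eq_bigr => k _; exact: substCM.
apply: IH; last first.
  by move: H0; rewrite Heq; case: rmPsi => D _ _; rewrite D HT add0r.
have Hsub : [pred k | b'' k != 0%R] \subset [predD1 [pred k | b k != 0%R] & j].
  apply/subsetP => k; rewrite !inE /b''; case: (k =P j) => [->|_]; first by rewrite eqxx.
  by [].
move: hc; rewrite (cardD1 j [pred k | b k != 0%R]) inE bj add1n ltnS.
by move=> hc; exact: leq_ltn_trans (subset_leq_card Hsub) hc.
Qed.

Lemma tensor_ker g : Psi g = 0 <-> ideal_gen Pgen g.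
Proof.
have rmPsi : rm Psi := rm_subst _.
split.
  case: (decomp_all g) => s ->.
  rewrite (big_nth (0,0)) big_mkord => H0.
  exact: (@tensor_main (#|[pred k : 'I_(size s) | (nth (0,0) s k).2 != 0%R]|).+1 _
     (fun k : 'I_(size s) => (nth (0,0) s k).1) (fun k : 'I_(size s) => (nth (0,0) s k).2) (ltnSn _) H0).
move=> [m [gg [c [Hg ->]]]].
rewrite (rm_sum _ _ _ rmPsi) big1 // => k _; case: rmPsi => _ M _; rewrite M.
case: (Hg k) => [[h [h0 ->]]|[h [h0 ->]]]; rewrite ?Psi_IX ?Psi_IY h0 /inl_poly /inr_poly (rm0 (rm_subst _)); exact: mulr0.
Qed.
End TensorMain.

Section Vec.
Variables (n : nat) (d : 'I_n -> nat).
Implicit Types (F G : {set 'I_n}) (x y : vec d).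

Lemma restrE F x k : restr F x k = if k \in F then x k else ord0.
Proof. by rewrite ffunE. Qed.

Lemma validP F x : reflect (forall k, if k \in F then (x k < d k)%N else x k == ord0) (validb F x).
Proof. exact: forallP. Qed.

Lemma valid_in F x k : validb F x -> k \in F -> (x k < d k)%N.
Proof. by move/validP/(_ k) => + kF; rewrite kF. Qed.

Lemma valid_out F x k : validb F x -> k \notin F -> x k = ord0.
Proof. by move/validP/(_ k) => + kF; rewrite (negbTE kF) => /eqP. Qed.

Lemma restr_restr F G x : F \subset G -> restr F (restr G x) = restr F x.
Proof.
move=> FG; apply/ffunP => k; rewrite !restrE; case: ifP => // kF.
by rewrite (subsetP FG k kF).
Qed.

Lemma restr_restr' F G x : F \subset G -> restr G (restr F x) = restr F x.
Proof.
move=> FG; apply/ffunP => k; rewrite !restrE; case: (boolP (k \in F)) => kF.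
  by rewrite (subsetP FG k kF).
by case: ifP.
Qed.

Lemma restr_valid F x : validb F x -> restr F x = x.
Proof.
move=> v; apply/ffunP => k; rewrite restrE; case: ifP => // /negbT kF.
by rewrite (valid_out v kF).
Qed.

Lemma valid_restr F G x : validb G x -> F \subset G -> validb F (restr F x).
Proof.
move=> v FG; apply/validP => k; rewrite restrE; case: (boolP (k \in F)) => kF /=; last by [].
exact: valid_in v (subsetP FG k kF).
Qed.

Lemma restr_eqP F x y : reflect (forall k, k \in F -> x k = y k) (restr F x == restr F y).
Proof.
apply: (iffP eqP) => [E k kF|E].
  by have := congr1 (fun f : vec d => f k) E; rewrite !restrE kF.
by apply/ffunP => k; rewrite !restrE; case: ifP => // /E.
Qed.

Lemma restrU F G x y :
  (restr (F :|: G) x == restr (F :|: G) y) = (restr F x == restr F y) && (restr G x == restr G y).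
Proof.
apply/restr_eqP/andP => [E|[/restr_eqP E1 /restr_eqP E2] k].
  by split; apply/restr_eqP => k kF; apply: E; rewrite inE kF ?orbT.
by rewrite inE => /orP [] ?; [apply: E1|apply: E2].
Qed.

Lemma avar_restr (K : fieldType) D F x : avar K D F (restr F x) = avar K D F x.
Proof. by rewrite /avar restr_restr. Qed.

Lemma avar_eq (K : fieldType) D F x y : restr F x = restr F y -> avar K D F x = avar K D F y.
Proof. by rewrite /avar => ->. Qed.

Lemma avarT (K : fieldType) D F x : F \in facets D -> validb F (restr F x) ->
  exists t : Aidx d D, val t = (F, restr F x) /\ avar K D F x = var K t.
Proof.
move=> fF v; rewrite /avar; case: insubP => [t _ vt|]; first by exists t.
by rewrite /= fF v.
Qed.

End Vec.

Lemma facetsP n (D : {set {set 'I_n}}) F :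
  reflect (F \in D /\ forall G, G \in D -> F \subset G -> G = F) (F \in facets D).
Proof.
rewrite /facets inE; apply: (iffP andP) => [[FD /forallP H]|[FD H]]; split => //.
  by move=> G GD FG; move: (H G); rewrite GD FG /= => /eqP.
apply/forallP => G; apply/implyP => GD; apply/implyP => FG; apply/eqP; exact: H.
Qed.

Lemma facets_sub n (D : {set {set 'I_n}}) F : F \in facets D -> F \in D.
Proof. by case/facetsP. Qed.

Lemma supp_sub n (D : {set {set 'I_n}}) F : F \in D -> F \subset supp D.
Proof. by move=> FD; apply: (bigcup_sup F FD). Qed.

Lemma supp_single n (D : {set {set 'I_n}}) k :
  simplicial_complex D -> k \in supp D -> [set k] \in D.
Proof.
move=> sc /bigcupP [F FD kF]; apply: (sc F) => //; by rewrite sub1set.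
Qed.

Section Cplx.
Variables (n : nat) (D D1 D2 : {set {set 'I_n}}) (S : {set 'I_n}).
Hypotheses (sD1 : simplicial_complex D1) (sD2 : simplicial_complex D2)
  (DU : D1 :|: D2 = D) (DI : D1 :&: D2 = powerset S).

Lemma S_D1 : S \in D1.
Proof.
have : S \in D1 :&: D2 by rewrite DI powersetE subxx.
by rewrite inE => /andP [].
Qed.

Lemma D1_D F : F \in D1 -> F \in D.
Proof. by rewrite -DU inE => ->. Qed.

Lemma s12S k : k \in supp D1 -> k \in supp D2 -> k \in S.
Proof.
move=> /(supp_single sD1) k1 /(supp_single sD2) k2.
have : [set k] \in D1 :&: D2 by rewrite inE k1 k2.
by rewrite DI powersetE sub1set.
Qed.

Lemma suppU : supp D1 :|: supp D2 = supp D.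
Proof. by rewrite -DU /supp bigcup_setU. Qed.

Lemma facet_in1 F : F \in facets D -> F \in D1 -> F \in facets D1.
Proof.
move=> /facetsP [FD max] F1; apply/facetsP; split => // G G1 FG.
exact: max (D1_D G1) FG.
Qed.

Lemma facet_out1 F : F \in facets D1 -> F \notin facets D -> F = S.
Proof.
move=> /facetsP [F1 max1]; rewrite /facets inE (D1_D F1) /= negb_forall => /existsP [G].
rewrite negb_imply => /andP [GD]; rewrite negb_imply => /andP [FG /eqP GF].
have G2 : G \in D2.
  move: GD; rewrite -DU inE => /orP [G1|//].
  by case: GF; exact: max1 G1 FG.
have F2 : F \in D2 by exact: (sD2 G2 FG).
have : F \in D1 :&: D2 by rewrite inE F1 F2.
rewrite DI powersetE => FS.
exact: esym (max1 S S_D1 FS).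
Qed.

Lemma facets_split1 (R : comRingType) (f : {set 'I_n} -> R) :
  \prod_(F in facets D1) f F =
  (\prod_(F in facets D | F \in D1) f F) *
  (if (S \in facets D1) && (S \notin facets D) then f S else 1).
Proof.
rewrite (bigID (fun F => F \in facets D)) /=; congr (_ * _).
  apply: eq_bigl => F; apply/andP/andP => [[F1 FD]|[FD F1]]; split => //.
    exact: facets_sub.
  exact: facet_in1.
case: ifP => [/andP [S1 SD]|Hc].
  rewrite (big_pred1 S) // => F; apply/andP/eqP => [[F1 FD]|->]; last by [].
  exact: facet_out1.
rewrite big_pred0 // => F; apply/andP => [[F1 FD]].
move: Hc; rewrite -(facet_out1 F1 FD) F1 FD.
by [].
Qed.

End Cplx.

Definition mergev n (d : 'I_n -> nat) (A : {set 'I_n}) (x1 x2 : vec d) : vec d :=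
  [ffun k => if k \in A then x1 k else x2 k].

Lemma phipsi_var (K : fieldType) n (d : 'I_n -> nat) (D : {set {set 'I_n}}) (H : {set 'I_n})
  (j : DF d (obs D H)) :
  phi_hid (psi_hid (D := D) (H := H) (var K j)) =
  \sum_(y : DF d (supp D) | restr (obs D H) (val y) == val j)
     \prod_(F in facets D) avar K D F (val y).
Proof.
rewrite /psi_hid substX /phi_hid (rm_sum _ _ _ (rm_subst _)); apply: eq_bigr => y _.
by rewrite substX.
Qed.

Lemma hid_subst (K : fieldType) n (d : 'I_n -> nat) (D : {set {set 'I_n}}) (H : {set 'I_n})
  (p : polyT K (DF d (obs D H))) :
  phi_hid (psi_hid (D := D) (H := H) p) =
  subst (fun t => phi_hid (psi_hid (D := D) (H := H) (var K t))) p.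
Proof. rewrite /phi_hid /psi_hid subst_comp; apply: subst_eq => t; by rewrite substX. Qed.

Lemma ideal_gen_mono (K : fieldType) (T : finType) (P Q : polyT K T -> Prop) f :
  (forall x, P x -> Q x) -> ideal_gen P f -> ideal_gen Q f.
Proof. move=> PQ [m [g [c [Hg ->]]]]; exists m, g, c; split => // k; exact: PQ. Qed.

Section Main.
Variables (K : fieldType) (n : nat) (d : 'I_n -> nat)
  (D D1 D2 : {set {set 'I_n}}) (S H G : {set 'I_n}).
Hypotheses (sD : simplicial_complex D) (suppD : supp D = [set: 'I_n])
  (sD1 : simplicial_complex D1) (sD2 : simplicial_complex D2)
  (DU : D1 :|: D2 = D) (DI : D1 :&: D2 = powerset S) (HS : H :&: S = set0)
  (GD : G \in facets D) (SG : S \subset G).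

Local Notation s1 := (supp D1).
Local Notation s2 := (supp D2).
Local Notation O := (obs D H).
Local Notation O1 := (obs D1 (H :&: supp D1)).
Local Notation O2 := (obs D2 (H :&: supp D2)).

Lemma DU' : D2 :|: D1 = D. Proof. by rewrite setUC. Qed.
Lemma DI' : D2 :&: D1 = powerset S. Proof. by rewrite setIC. Qed.

Lemma inO k : (k \in O) = (k \notin H).
Proof. by rewrite /obs in_setD suppD in_setT andbT. Qed.

Lemma inO1 k : (k \in O1) = (k \notin H) && (k \in s1).
Proof. by rewrite /obs in_setD in_setI negb_and; case: (k \in s1); rewrite ?orbT ?orbF ?andbF. Qed.

Lemma inO2 k : (k \in O2) = (k \notin H) && (k \in s2).
Proof. by rewrite /obs in_setD in_setI negb_and; case: (k \in s2); rewrite ?orbT ?orbF ?andbF. Qed.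

Lemma s12 k : (k \in s1) || (k \in s2).
Proof. by rewrite -in_setU (suppU DU) suppD in_setT. Qed.

Lemma O_U : O = O1 :|: O2.
Proof.
apply/setP => k; rewrite in_setU inO inO1 inO2 -andb_orr.
by rewrite s12 andbT.
Qed.

Lemma O1_O : O1 \subset O. Proof. by rewrite O_U subsetUl. Qed.
Lemma O2_O : O2 \subset O. Proof. by rewrite O_U subsetUr. Qed.
Lemma O1_s1 : O1 \subset s1. Proof. by apply/subsetP => k; rewrite inO1 => /andP []. Qed.
Lemma O2_s2 : O2 \subset s2. Proof. by apply/subsetP => k; rewrite inO2 => /andP []. Qed.

Lemma notH_S k : k \in S -> k \notin H.
Proof.
move=> kS; apply/negP => kH.
have : k \in H :&: S by rewrite inE kH kS.
by rewrite HS inE.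
Qed.

Lemma S_s1 : S \subset s1. Proof. exact: supp_sub (S_D1 DI). Qed.
Lemma S_s2 : S \subset s2. Proof. exact: supp_sub (S_D1 DI'). Qed.

Lemma S_O1 : S \subset O1.
Proof. by apply/subsetP => k kS; rewrite inO1 notH_S // (subsetP S_s1). Qed.
Lemma S_O2 : S \subset O2.
Proof. by apply/subsetP => k kS; rewrite inO2 notH_S // (subsetP S_s2). Qed.

Lemma O12S k : k \in O1 -> k \in O2 -> k \in S.
Proof.
rewrite inO1 inO2 => /andP [_ k1] /andP [_ k2]; exact: (s12S sD1 sD2 DI).
Qed.

Definition j_of (i : DF d O) : DF d O1 := exist _ (restr O1 (val i)) (valid_restr (valP i) O1_O).
Definition k_of (i : DF d O) : DF d O2 := exist _ (restr O2 (val i)) (valid_restr (valP i) O2_O).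

Lemma qdeg_eq i : qdeg S (j_of i) == qdeg S (k_of i).
Proof.
apply/eqP/ffunP => t; rewrite !ffunE /= !restr_restr //; [exact: S_O2|exact: S_O1].
Qed.

Definition phiz (i : DF d O) : Zidx (@qdeg n d S O1) (@qdeg n d S O2) :=
  exist _ (j_of i, k_of i) (qdeg_eq i).

Lemma qdeg_restr (x : DF d O1) (y : DF d O2) :
  qdeg S x == qdeg S y -> restr S (val x) = restr S (val y).
Proof.
move/eqP/ffunP => E.
have := E (exist _ (restr S (val x)) (valid_restr (valP x) S_O1)).
rewrite !ffunE /= eqxx; case: eqP => //.
Qed.

Lemma merge_valid (z : Zidx (@qdeg n d S O1) (@qdeg n d S O2)) :
  validb O (mergev O1 (val (val z).1) (val (val z).2)).
Proof.
apply/validP => k; rewrite ffunE; case: ifP => kO.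
  case: ifP => k1; first exact: valid_in (valP (val z).1) k1.
  apply: valid_in (valP (val z).2) _; move: kO; rewrite O_U in_setU k1 //.
rewrite ifF; last by apply/negbTE; apply: contraFN kO; apply: (subsetP O1_O).
apply/eqP; apply: valid_out (valP (val z).2) _; apply: contraFN kO; apply: (subsetP O2_O).
Qed.

Definition phiz_inv (z : Zidx (@qdeg n d S O1) (@qdeg n d S O2)) : DF d O :=
  exist (fun x => validb O x) _ (merge_valid z).

Lemma phiz_bij : bijective phiz.
Proof.
exists phiz_inv.
  move=> i; apply: val_inj; apply/ffunP => k; rewrite /= ffunE !restrE.
  case: (boolP (k \in O1)) => k1 //; case: (boolP (k \in O2)) => k2 //.
  by rewrite (valid_out (valP i)) // O_U in_setU negb_or k1 k2.
case=> [[x y] /= Exy]; apply: val_inj => /=; congr (_, _); apply: val_inj => /=.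
  apply/ffunP => k; rewrite restrE ffunE; case: (boolP (k \in O1)) => k1 //.
  by rewrite (valid_out (valP x)).
apply/ffunP => k; rewrite restrE ffunE; case: (boolP (k \in O2)) => k2.
  case: (boolP (k \in O1)) => k1 //.
  have kS := O12S k1 k2.
  by have := congr1 (fun f : vec d => f k) (qdeg_restr Exy); rewrite !restrE kS.
by rewrite (valid_out (valP y)).
Qed.


Lemma s1_sub : s1 \subset supp D. Proof. by rewrite -(suppU DU) subsetUl. Qed.
Lemma s2_sub : s2 \subset supp D. Proof. by rewrite -(suppU DU) subsetUr. Qed.

Definition r1 (y : DF d (supp D)) : DF d s1 := exist _ (restr s1 (val y)) (valid_restr (valP y) s1_sub).
Definition r2 (y : DF d (supp D)) : DF d s2 := exist _ (restr s2 (val y)) (valid_restr (valP y) s2_sub).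

Lemma mergeS_valid (p : DF d s1 * DF d s2) : validb (supp D) (mergev s1 (val p.1) (val p.2)).
Proof.
apply/validP => k; rewrite suppD in_setT ffunE; case: ifP => k1.
  exact: valid_in (valP p.1) k1.
apply: valid_in (valP p.2) _; by move: (s12 k); rewrite k1.
Qed.

Definition mg (p : DF d s1 * DF d s2) : DF d (supp D) :=
  exist (fun x => validb (supp D) x) _ (mergeS_valid p).

Lemma sum_split (R : comRingType) (f1 f2 : vec d -> R) (i : DF d O) :
  (forall y, f1 (restr s1 y) = f1 y) -> (forall y, f2 (restr s2 y) = f2 y) ->
  \sum_(y : DF d (supp D) | restr O (val y) == val i) f1 (val y) * f2 (val y) =
  (\sum_(y1 : DF d s1 | restr O1 (val y1) == restr O1 (val i)) f1 (val y1)) *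
  (\sum_(y2 : DF d s2 | restr O2 (val y2) == restr O2 (val i)) f2 (val y2)).
Proof.
move=> h1 h2; rewrite big_distrlr /= pair_big_dep /=.
rewrite (reindex_onto (fun y => (r1 y, r2 y)) mg) /=; last first.
  move=> [y1 y2] /= /andP [/restr_eqP c1 /restr_eqP c2]; congr (_, _); apply: val_inj; apply/ffunP => k;
    rewrite /= restrE ffunE.
    case: (boolP (k \in s1)) => k1 //.
    by rewrite (valid_out (valP y1)).
  case: (boolP (k \in s2)) => k2; last by rewrite (valid_out (valP y2)) //; case: ifP.
  case: (boolP (k \in s1)) => k1 //.
  have kS := s12S sD1 sD2 DI k1 k2.
  by rewrite (c1 k (subsetP S_O1 k kS)) (c2 k (subsetP S_O2 k kS)).
apply: eq_big => y; last by move=> _; rewrite h1 h2.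
rewrite /= !restr_restr; [|exact: O2_s2|exact: O1_s1].
have -> : mg (r1 y, r2 y) == y.
  apply/eqP/val_inj/ffunP => k; rewrite /= ffunE !restrE.
  case: (boolP (k \in s1)) => k1 //; case: (boolP (k \in s2)) => k2 //.
  by move: (s12 k); rewrite (negbTE k1) (negbTE k2).
rewrite andbT -restrU -O_U.
by rewrite (restr_valid (valP i)).
Qed.


Local Notation A := (Aidx d D).
Local Notation A1 := (Aidx d D1).
Local Notation A2 := (Aidx d D2).
Local Notation E1 := (@inl_poly K A1 A2).
Local Notation E2 := (@inr_poly K A1 A2).

Definition c1 (x : vec d) : polyT K (A1 + A2)%type :=
  if (S \in facets D1) && (S \notin facets D) then E1 (avar K D1 S x) else 1.
Definition c2 (x : vec d) : polyT K (A1 + A2)%type :=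
  if (S \in facets D2) && (S \notin facets D) then E2 (avar K D2 S x) else 1.

Definition nuv (t : A) : polyT K (A1 + A2)%type :=
  ((if (val t).1 \in D1 then E1 (avar K D1 (val t).1 (val t).2) else 1) *
   (if (val t).1 \in D2 then E2 (avar K D2 (val t).1 (val t).2) else 1)) *
  (if (val t).1 == G then c1 (val t).2 * c2 (val t).2 else 1).
Definition nu := subst nuv.

Definition muv (u : (A1 + A2)%type) : polyT K A :=
  match u with
  | inl t => if (val t).1 \in facets D then avar K D (val t).1 (val t).2 else 1
  | inr t => if ((val t).1 \in facets D) && ((val t).1 \notin D1)
             then avar K D (val t).1 (val t).2 else 1
  end.
Definition mu := subst muv.

Lemma muE1 F x : F \in facets D1 -> validb F (restr F x) ->
  mu (E1 (avar K D1 F x)) = if F \in facets D then avar K D F x else 1.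
Proof.
move=> F1 v; have [t [vt ->]] := avarT K F1 v.
by rewrite /mu /inl_poly !substX /= vt /= avar_restr.
Qed.

Lemma muE2 F x : F \in facets D2 -> validb F (restr F x) ->
  mu (E2 (avar K D2 F x)) = if (F \in facets D) && (F \notin D1) then avar K D F x else 1.
Proof.
move=> F2 v; have [t [vt ->]] := avarT K F2 v.
by rewrite /mu /inr_poly !substX /= vt /= avar_restr.
Qed.

Lemma mu_nu p : mu (nu p) = p.
Proof.
apply: (@morph_ext K _ _ (mu \o nu) id).
- exact: rm_comp (rm_subst _).
- by split.
- by move=> c; rewrite /= /mu /nu !substC.
case=> [[F x] Ht]; have /andP [/= FD vx] := Ht.
have rmMu : rm mu := rm_subst _.
rewrite /= /nu substX /nuv /=.
have FinD := facets_sub FD.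
have xF : restr F x = x := restr_valid vx.
have Hvar : avar K D F x = var K (exist _ (F, x) Ht).
  have vF : validb F (restr F x) by rewrite xF.
  have [t [vt ->]] := avarT K (x:=x) FD vF.
  by congr (var K _); apply: val_inj; rewrite vt xF.
case: rmMu => _ M one.
have HG : mu (if F == G then c1 x * c2 x else 1) = 1.
  case: eqP => [FG|_]; last exact: one.
  have SF : S \subset F by rewrite FG.
  have vS := valid_restr vx SF.
  rewrite M /c1 /c2.
  case: ifP => [/andP [S1 nSD]|_]; last rewrite one.
    rewrite muE1 // (negbTE nSD).
    case: ifP => [/andP [S2 _]|_]; last by rewrite one mulr1.
    by rewrite muE2 // (negbTE nSD) mulr1.
  case: ifP => [/andP [S2 nSD]|_]; last by rewrite one mulr1.
  by rewrite muE2 // (negbTE nSD) mul1r.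
rewrite M HG mulr1 M.
case: (boolP (F \in D1)) => F1.
  have F1' := facet_in1 DU FD F1.
  have vF : validb F (restr F x) by rewrite xF.
  rewrite muE1 // FD -Hvar.
  case: ifP => F2; last by rewrite one mulr1.
  have F2' := facet_in1 DU' FD F2; rewrite muE2 //.
  by rewrite FD F1 /= mulr1.
have F2 : F \in D2 by move: FinD; rewrite -DU inE (negbTE F1).
have vF : validb F (restr F x) by rewrite xF.
have F2' := facet_in1 DU' FD F2.
rewrite one mul1r F2 muE2 //.
by rewrite FD F1 Hvar.
Qed.

Lemma c1_eq x x' : restr S x = restr S x' -> c1 x = c1 x'.
Proof. by move=> E; rewrite /c1 (avar_eq _ _ E). Qed.
Lemma c2_eq x x' : restr S x = restr S x' -> c2 x = c2 x'.
Proof. by move=> E; rewrite /c2 (avar_eq _ _ E). Qed.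

Lemma nu_avar F (y : DF d (supp D)) : F \in facets D ->
  nu (avar K D F (val y)) =
  ((if F \in D1 then E1 (avar K D1 F (val y)) else 1) *
   (if F \in D2 then E2 (avar K D2 F (val y)) else 1)) *
  (if F == G then c1 (val y) * c2 (val y) else 1).
Proof.
move=> FD.
have vF : validb F (restr F (val y)) := valid_restr (valP y) (supp_sub (facets_sub FD)).
have [t [vt ->]] := avarT K FD vF.
rewrite /nu substX /nuv vt /= !avar_restr.
case: eqP => [FG|//]; rewrite FG in vF *.
by rewrite (@c1_eq _ (val y)) ?(@c2_eq _ (val y)) // restr_restr.
Qed.

Definition psi1 (j : DF d O1) : polyT K A1 := phi_hid (psi_hid (D := D1) (H := H :&: s1) (var K j)).
Definition psi2 (k : DF d O2) : polyT K A2 := phi_hid (psi_hid (D := D2) (H := H :&: s2) (var K k)).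
Definition Lv (i : DF d O) : polyT K A := phi_hid (psi_hid (D := D) (H := H) (var K i)).

Lemma S_O : S \subset O. Proof. exact: subset_trans S_O1 O1_O. Qed.

Lemma nu_Lv i : nu (Lv i) = E1 (psi1 (j_of i)) * E2 (psi2 (k_of i)).
Proof.
have rmE1 : rm E1 := rm_subst _.
have rmE2 : rm E2 := rm_subst _.
pose T1 (y : vec d) := \prod_(F in facets D | F \in D1) E1 (avar K D1 F y).
pose T2 (y : vec d) := \prod_(F in facets D | F \in D2) E2 (avar K D2 F y).
have h1 y : T1 (restr s1 y) = T1 y.
  apply: eq_bigr => F /andP [_ F1]; congr (E1 _); apply: avar_eq.
  by rewrite restr_restr // supp_sub.
have h2 y : T2 (restr s2 y) = T2 y.
  apply: eq_bigr => F /andP [_ F2]; congr (E2 _); apply: avar_eq.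
  by rewrite restr_restr // supp_sub.
transitivity ((\sum_(y : DF d (supp D) | restr O (val y) == val i) T1 (val y) * T2 (val y)) *
              (c1 (val i) * c2 (val i))).
  rewrite /Lv phipsi_var /nu (rm_sum _ _ _ (rm_subst _)) -/nu mulr_suml.
  apply: eq_bigr => y /eqP Hy0.
  have Hy : forall k, k \in O -> val y k = val i k.
    by move=> k kO; have := congr1 (fun f : vec d => f k) Hy0; rewrite restrE kO.
  rewrite /nu (rm_prod _ _ _ (rm_subst _)) -/nu.
  rewrite (eq_bigr _ (fun F FD => nu_avar y FD)) !big_split /= -!big_mkcondr -/(T1 _) -/(T2 _).
  rewrite (big_pred1 G); last first.
    by move=> F; rewrite /= andbC; case: eqP => // ->.
  rewrite (@c1_eq _ (val i)) ?(@c2_eq _ (val i)) //;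
    by apply/eqP/restr_eqP => k kS; apply: Hy; apply: (subsetP S_O).
rewrite sum_split // /psi1 /psi2 !phipsi_var /=.
have HS1 : forall y1 : DF d s1, restr O1 (val y1) == restr O1 (val i) ->
    restr S (val y1) = restr S (val i).
  move=> y1 /restr_eqP E; apply/eqP/restr_eqP => k kS.
  exact: E k (subsetP S_O1 k kS).
have HS2 : forall y2 : DF d s2, restr O2 (val y2) == restr O2 (val i) ->
    restr S (val y2) = restr S (val i).
  move=> y2 /restr_eqP E; apply/eqP/restr_eqP => k kS.
  exact: E k (subsetP S_O2 k kS).
rewrite (eq_bigr (fun y1 : DF d s1 => (\prod_(F in facets D | F \in D1) avar K D1 F (val y1)) *
   (if (S \in facets D1) && (S \notin facets D) then avar K D1 S (val i) else 1))); last first.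
  move=> y1 Hy1; rewrite (facets_split1 sD2 DU DI); congr (_ * _).
  by case: ifP => // _; apply: avar_eq; exact: HS1.
rewrite [in RHS](eq_bigr (fun y2 : DF d s2 => (\prod_(F in facets D | F \in D2) avar K D2 F (val y2)) *
   (if (S \in facets D2) && (S \notin facets D) then avar K D2 S (val i) else 1))); last first.
  move=> y2 Hy2; rewrite (facets_split1 sD1 DU' DI'); congr (_ * _).
  by case: ifP => // _; apply: avar_eq; exact: HS2.
rewrite -!mulr_suml.
have [_ M1 one1] := rmE1; have [_ M2 one2] := rmE2.
rewrite M1 M2 (rm_sum _ _ _ rmE1) (rm_sum _ _ _ rmE2).
have -> : E1 (if (S \in facets D1) && (S \notin facets D) then avar K D1 S (val i) else 1) = c1 (val i).
  by rewrite /c1; case: ifP.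
have -> : E2 (if (S \in facets D2) && (S \notin facets D) then avar K D2 S (val i) else 1) = c2 (val i).
  by rewrite /c2; case: ifP.
rewrite mulrACA; congr (_ * _); congr (_ * _); apply: eq_bigr => y _; rewrite /T1 /T2.
  by rewrite (rm_prod _ _ _ rmE1).
by rewrite (rm_prod _ _ _ rmE2).
Qed.

Lemma main_equiv (f : polyT K (DF d O)) :
  @hidden_ideal K n d D H f <->
  tfp (@hidden_ideal K n d D1 (H :&: s1)) (@hidden_ideal K n d D2 (H :&: s2))
      (subst (fun i => var K (phiz i)) f).
Proof.
have rmPsi : rm (Psi psi1 psi2) := rm_subst _.
have Heq : Psi psi1 psi2 (subst (fun z : Zidx (@qdeg n d S O1) (@qdeg n d S O2) =>
      var K (inl (val z).1 : (DF d O1 + DF d O2)%type) * var K (inr (val z).2 : (DF d O1 + DF d O2)%type))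
      (subst (fun i => var K (phiz i)) f)) = nu (subst Lv f).
  rewrite /Psi /nu !subst_comp; apply: subst_eq => i; rewrite !substX /= -/nu nu_Lv.
  have [_ M _] := rm_subst (fun z : (DF d O1 + DF d O2)%type =>
    match z with inl j => E1 (psi1 j) | inr k => E2 (psi2 k) end).
  by rewrite M !substX.
rewrite /hidden_ideal hid_subst -/Lv.
transitivity (nu (subst Lv f) = 0).
  split => [->|H0]; first exact: (rm0 (rm_subst _)).
  by rewrite -(mu_nu (subst Lv f)) H0 /mu (rm0 (rm_subst _)).
rewrite -Heq tensor_ker /tfp; split; apply: ideal_gen_mono => x [] [h [h0 ->]];
  by [left; exists h; rewrite hid_subst| right; exists h; rewrite hid_subst
     | left; exists h; rewrite -hid_subst| right; exists h; rewrite -hid_subst].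
Qed.

End Main.

Lemma exists_facet n (D : {set {set 'I_n}}) F : F \in D ->
  exists G, G \in facets D /\ F \subset G.
Proof.
move=> FD.
have [|G /andP [GD FG] max] := @arg_maxnP _ F (fun G => (G \in D) && (F \subset G)) (fun G => #|G|).
  by rewrite FD subxx.
exists G; split => //; apply/facetsP; split => // G' G'D GG'.
apply/eqP; rewrite eq_sym eqEcard GG' /=; apply: max.
by rewrite G'D (subset_trans FG GG').
Qed.

Lemma unitv_indep n (d : 'I_n -> nat) (S : {set 'I_n}) (c : DF d S -> int) :
  \sum_(s : DF d S) unitv s *~ c s = 0 -> forall s, c s = 0.
Proof.
move=> Hc s; have := congr1 (fun f : {ffun DF d S -> int} => f s) Hc.
rewrite sum_ffunE ffunE (bigD1 s) //= ffunMzE ffunE eqxx big1 ?addr0.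
  by rewrite mulrzz /= mul1r.
by move=> t ts; rewrite ffunMzE ffunE eq_sym (negbTE ts) mulrzz mul0r.
Qed.

Unset Implicit Arguments.

Theorem theorem3p6 (K : fieldType) (n : nat) (d : 'I_n -> nat)
  (D D1 D2 : {set {set 'I_n}}) (S H : {set 'I_n}) :
  simplicial_complex D -> supp D = [set: 'I_n] -> (forall k, 2 <= d k)%N ->
  simplicial_complex D1 -> simplicial_complex D2 ->
  D1 \subset D -> D2 \subset D ->
  D1 :|: D2 = D -> D1 :&: D2 = powerset S -> H :&: S = set0 ->
  let H1 := H :&: supp D1 in
  let H2 := H :&: supp D2 in
  let O1 := obs D1 H1 in
  let O2 := obs D2 H2 in
  (* A = {e_sigma : sigma in D_S} is linearly independent *)
  (forall c : DF d S -> int,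
      \sum_(s : DF d S) unitv s *~ c s = 0 -> forall s, c s = 0) /\
  (* the identification q_i <-> z_{i|Delta1|, i|Delta2|} and the equality of ideals *)
  exists phiz : DF d (obs D H) -> Zidx (qdeg S (O := O1)) (qdeg S (O := O2)),
    bijective phiz /\
    (forall i, val (val (phiz i)).1 = restr O1 (val i) /\
               val (val (phiz i)).2 = restr O2 (val i)) /\
    (forall f : polyT K (DF d (obs D H)),
       @hidden_ideal K n d D H f <->
       tfp (@hidden_ideal K n d D1 H1) (@hidden_ideal K n d D2 H2)
           (subst (fun i => var K (phiz i)) f)).
Proof.
move=> sD suppD _ sD1 sD2 _ _ DU DI HS H1 H2 O1 O2.
split; first exact: unitv_indep.
have [G [GD SG]] := exists_facet (D1_D DU (S_D1 DI)).
exists (phiz suppD DU DI HS); split; first exact: phiz_bij.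
split; first by move=> i.
exact: (main_equiv suppD sD1 sD2 DU DI HS GD SG).
Qed.
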